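(* Consider the reaction network (BI)+(BII) on the twelve species $\mathrm{NE}_i,\mathrm{NI}_i,\mathrm{N}_i,\mathrm{D}_i,\mathrm{T}_i,\mathrm{C}_i$ ($i=1,2$) with the irreversible reactions \[ \begin{aligned} &11:\ \mathrm{NI}_1+\mathrm{NE}_1\to \mathrm{N}_1, && 21:\ \mathrm{NI}_2+\mathrm{NE}_2\to \mathrm{N}_2,\\ &12:\ \mathrm{N}_1+\mathrm{D}_2\to \mathrm{NI}_1+\mathrm{T}_2, && 22:\ \mathrm{N}_2+\mathrm{D}_1\to \mathrm{NI}_2+\mathrm{T}_1,\\ &13:\ \mathrm{T}_1\to \mathrm{NE}_1+\mathrm{D}_1, && 23:\ \mathrm{T}_2\to \mathrm{NE}_2+\mathrm{D}_2,\\ &14:\ \mathrm{N}_1+\mathrm{D}_1\to \mathrm{C}_1, && 24:\ \mathrm{N}_2+\mathrm{D}_2\to \mathrm{C}_2,\\ &15:\ \mathrm{C}_1\to \mathrm{N}_1+\mathrm{D}_1, && 25:\ \mathrm{C}_2\to \mathrm{N}_2+\mathrm{D}_2, \end{aligned} \] and the associated ODE system \[ \begin{cases} [\dot{\mathrm{NE}}_1]=-r_{11}([\mathrm{NI}_1],[\mathrm{NE}_1])+r_{13}([\mathrm{T}_1]),\\ [\dot{\mathrm{NI}}_1]=r_{12}([\mathrm{N}_1],[\mathrm{D}_2])-r_{11}([\mathrm{NI}_1],[\mathrm{NE}_1]),\\ [\dot{\mathrm{N}}_1]=-r_{12}([\mathrm{N}_1],[\mathrm{D}_2])+r_{11}([\mathrm{NI}_1],[\mathrm{NE}_1])+r_{15}([\mathrm{C}_1])-r_{14}([\mathrm{N}_1],[\mathrm{D}_1]),\\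 [\dot{\mathrm{D}}_1]=r_{13}([\mathrm{T}_1])-r_{22}([\mathrm{N}_2],[\mathrm{D}_1])+r_{15}([\mathrm{C}_1])-r_{14}([\mathrm{N}_1],[\mathrm{D}_1]),\\ [\dot{\mathrm{T}}_1]=-r_{13}([\mathrm{T}_1])+r_{22}([\mathrm{N}_2],[\mathrm{D}_1]),\\ [\dot{\mathrm{C}}_1]=-r_{15}([\mathrm{C}_1])+r_{14}([\mathrm{N}_1],[\mathrm{D}_1]),\\ [\dot{\mathrm{NE}}_2]=-r_{21}([\mathrm{NI}_2],[\mathrm{NE}_2])+r_{23}([\mathrm{T}_2]),\\ [\dot{\mathrm{NI}}_2]=r_{22}([\mathrm{N}_2],[\mathrm{D}_1])-r_{21}([\mathrm{NI}_2],[\mathrm{NE}_2]),\\ [\dot{\mathrm{N}}_2]=-r_{22}([\mathrm{N}_2],[\mathrm{D}_1])+r_{21}([\mathrm{NI}_2],[\mathrm{NE}_2])+r_{25}([\mathrm{C}_2])-r_{24}([\mathrm{N}_2],[\mathrm{D}_2]),\\ [\dot{\mathrm{D}}_2]=-r_{12}([\mathrm{N}_1],[\mathrm{D}_2])+r_{23}([\mathrm{T}_2])+r_{25}([\mathrm{C}_2])-r_{24}([\mathrm{N}_2],[\mathrm{D}_2]),\\ [\dot{\mathrm{T}}_2]=r_{12}([\mathrm{N}_1],[\mathrm{D}_2])-r_{23}([\mathrm{T}_2]),\\ [\dot{\mathrm{C}}_2]=-r_{25}([\mathrm{C}_2])+r_{24}([\mathrm{N}_2],[\mathrm{D}_2]),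 \end{cases} \] with the kinetic symmetry constraints $r_{1k}\equiv r_{2k}$ for $k=1,2,3,4,5$. Then the system has the capacity for zero-eigenvalue bifurcations and thus for differentiation. Moreover, up to the symmetry swapping the cell indices $1\leftrightarrow2$, there are exactly three instability motifs associated to unstable-positive feedbacks, namely, for $(j,k)=(1,2)$ and $(j,k)=(2,1)$: (a) species $\{\mathrm{NI}_j,\mathrm{N}_j,\mathrm{D}_j,\mathrm{N}_k,\mathrm{D}_k\}$ with reactions $\{j1,j2,j4,k2,k4\}$; (b) species $\{\mathrm{T}_j,\mathrm{D}_j,\mathrm{N}_j,\mathrm{N}_k,\mathrm{D}_k\}$ with reactions $\{j2,j3,j4,k2,k4\}$; (c) species $\{\mathrm{NI}_j,\mathrm{N}_j,\mathrm{D}_j,\mathrm{NE}_k,\mathrm{N}_k,\mathrm{T}_k\}$ with reactions $\{j1,j2,j4,k1,k2,k3\}$. All three motifs identify non-autocatalytic positive feedback, and the network (BI)+(BII) is non-autocatalytic.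
   Context: General setting. A reaction network has species $X_1,\dots,X_M$ and irreversible reactions $j:\ \sum_m s^j_m X_m\to\sum_m \tilde s^j_m X_m$ with nonnegative stoichiometric coefficients; $X_m$ is a reactant of $j$ if $s^j_m>0$. The stoichiometric matrix is $S_{mj}=\tilde s^j_m-s^j_m$; the ODE system is $\dot x=S\mathbf r(x)$ with rates $r_j$ that are monotone chemical: (i) $r_j\ge0$ on $\mathbb R^M_{\ge0}$; (ii) $r_j(x)>0$ iff $x_m>0$ for all reactants $X_m$ of $j$; (iii) $\partial r_j/\partial x_m\equiv0$ if $X_m$ is not a reactant of $j$; (iv) $\partial r_j/\partial x_m>0$ for $x>0$ and $X_m$ a reactant of $j$. Kinetics are assumed parameter-rich: at any positive steady state the partial derivatives $\partial r_j/\partial x_m$ (for reactants) can be prescribed as arbitrary positive numbers. Symbolic analysis: $R$ is the symbolic reactivity matrix ($R_{jm}=r_{jm}>0$ a symbol if $X_m$ is a reactant of $j$, else $0$), $G=SR$ the symbolic Jacobian, $n=\dim\ker S^T$, and $a_{M-n}$ the sum of the principal minors of order $M-n$ of $G$ (for a nondegenerate network, the determinant of the Jacobian restricted to a stoichiometric compatibility class $(x_0+\operatorname{Im}S)\cap\mathbb R^M_{>0}$). The network has the capacity for zero-eigenvalue bifurcation (differentiation) if there exist positive symbol values with $a_{M-n}=0$ satisfying kinetic symmetry at a homogeneous steady state, i.e. $r_{jm}=r_{\sigma(j)\sigma(m)}$ where $\sigma$ swaps cell indices $1\leftrightarrow2$ of reactions and species. A $k$-Child-Selection (CS) triple $(\kappa,E_\kappa,J)$: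 $k$ species $\kappa$, $k$ reactions $E_\kappa$, bijection $J:\kappa\to E_\kappa$ with each $X_m\in\kappa$ a reactant of $J(X_m)$; its CS-matrix is $S[\kappa]_{ml}=S_{m,J(X_l)}$, $X_m,X_l\in\kappa$. An unstable-positive feedback is a $k\times k$ CS-matrix with $\operatorname{sign}\det S[\kappa]=(-1)^{k-1}$ such that no principal $k'\times k'$ submatrix, $k'<k$, has determinant of sign $(-1)^{k'-1}$. Its instability motif is the subnetwork with species $\kappa$ and reactions $E_\kappa$ (species outside $\kappa$ are disregarded). An unstable-positive feedback is autocatalytic if it is a Metzler matrix (nonnegative off-diagonal entries); a network is autocatalytic if it has an autocatalytic unstable-positive feedback, non-autocatalytic otherwise. Reaction labels $jk$ denote reaction number $k$ of cell $j$ in the list above. *)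

(* Defs.v *)
From HB Require Import structures.
From mathcomp Require Import all_boot all_order all_algebra.
From mathcomp Require Export reals.
Set Implicit Arguments. Unset Strict Implicit. Unset Printing Implicit Defensive.
Import Order.TTheory GRing.Theory Num.Theory.
Local Open Scope ring_scope.

Record network (M Jn : nat) := Network {
  sreac : 'I_M -> 'I_Jn -> nat;
  sprod : 'I_M -> 'I_Jn -> nat }.

Section General.
Variables (M Jn : nat).
Implicit Types (N : network M Jn).

Definition reactant N (m : 'I_M) (j : 'I_Jn) : bool := (0 < sreac N m j)%N.

Definition stoich N : 'M[int]_(M, Jn) :=
  \matrix_(m, j) ((sprod N m j)%:Z - (sreac N m j)%:Z).

(* symbolic reactivity matrix, evaluated at values r j m of the symbols r_{jm} *)
Definition reactivity (R : numDomainType) N (r : 'I_Jn -> 'I_M -> R) : 'M[R]_(Jn, M) :=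
  \matrix_(j, m) (if reactant N m j then r j m else 0).

Definition sjacobian (R : numDomainType) N (r : 'I_Jn -> 'I_M -> R) : 'M[R]_M :=
  map_mx intr (stoich N) *m reactivity N r.

(* n = dim ker S^T ; kermx A spans {u | u *m A = 0}, i.e. ker A^T (transposed) *)
Definition cons_dim (R : fieldType) N : nat :=
  \rank (kermx (map_mx intr (stoich N) : 'M[R]_(M, Jn))).

End General.

Definition principal_submx (R : Type) (n : nat) (A : 'M[R]_n) (B : {set 'I_n})
  : 'M[R]_#|B| := \matrix_(i, j) A (enum_val i) (enum_val j).

Definition sum_pminors (R : comRingType) (n : nat) (A : 'M[R]_n) (k : nat) : R :=
  \sum_(B : {set 'I_n} | #|B| == k) \det (principal_submx A B).

Definition a_coef (R : realFieldType) (M Jn : nat) (N : network M Jn)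
  (r : 'I_Jn -> 'I_M -> R) : R :=
  sum_pminors (sjacobian N r) (M - cons_dim R N).

Definition capacity_zero_eig (R : realFieldType) (M Jn : nat) (N : network M Jn)
  (sigs : 'I_M -> 'I_M) (sigr : 'I_Jn -> 'I_Jn) : Prop :=
  exists r : 'I_Jn -> 'I_M -> R,
    (forall j m, reactant N m j -> 0 < r j m) /\
    (forall j m, reactant N m j -> r j m = r (sigr j) (sigs m)) /\
    a_coef N r = 0.

(* Child-Selection triple: kappa enumerated by kap : 'I_k -> species,
   E_kappa enumerated by Jf : 'I_k -> reactions, J(kap i) = Jf i *)
Definition is_cs (M Jn k : nat) (N : network M Jn)
  (kap : 'I_k -> 'I_M) (Jf : 'I_k -> 'I_Jn) : Prop :=
  injective kap /\ injective Jf /\ (forall i, reactant N (kap i) (Jf i)).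

Definition cs_matrix (M Jn k : nat) (N : network M Jn)
  (kap : 'I_k -> 'I_M) (Jf : 'I_k -> 'I_Jn) : 'M[int]_k :=
  \matrix_(i, l) stoich N (kap i) (Jf l).

Definition unstable_positive (k : nat) (A : 'M[int]_k) : Prop :=
  (0 < k)%N /\
  Num.sg (\det A) = (-1) ^+ k.-1 /\
  (forall B : {set 'I_k}, (0 < #|B| < k)%N ->
     Num.sg (\det (principal_submx A B)) != (-1) ^+ (#|B|.-1)).

Definition metzler (k : nat) (A : 'M[int]_k) : Prop :=
  forall i j : 'I_k, i != j -> 0 <= A i j.

Definition motif (M Jn k : nat) (kap : 'I_k -> 'I_M) (Jf : 'I_k -> 'I_Jn)
  : {set 'I_M} * {set 'I_Jn} :=
  ([set kap i | i : 'I_k], [set Jf i | i : 'I_k]).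

Definition autocatalytic_network (M Jn : nat) (N : network M Jn) : Prop :=
  exists (k : nat) (kap : 'I_k -> 'I_M) (Jf : 'I_k -> 'I_Jn),
    is_cs N kap Jf /\ unstable_positive (cs_matrix N kap Jf) /\
    metzler (cs_matrix N kap Jf).

(* species: cell c in {0,1} (paper's cells 1,2), type t:
   NE=0, NI=1, N=2, D=3, T=4, C=5; index 6*c + t.
   reactions: reaction number i in 1..5 of cell c has index 5*c + (i-1). *)

Definition NE := 0%N. Definition NI := 1%N. Definition Nn := 2%N.
Definition D := 3%N. Definition T := 4%N. Definition C := 5%N.

Definition sp (c t : nat) : 'I_12 := inord (6 * c + t).
Definition rx (c i : nat) : 'I_10 := inord (5 * c + i.-1).

Definition bn_reac : seq (seq nat) :=
  [:: [:: 1; 0]; [:: 2; 9]; [:: 4]; [:: 2; 3]; [:: 5];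
      [:: 7; 6]; [:: 8; 3]; [:: 10]; [:: 8; 9]; [:: 11]]%N.
Definition bn_prod : seq (seq nat) :=
  [:: [:: 2]; [:: 1; 10]; [:: 0; 3]; [:: 5]; [:: 2; 3];
      [:: 8]; [:: 7; 4]; [:: 6; 9]; [:: 11]; [:: 8; 9]]%N.

Definition notch_net : network 12 10 :=
  Network (fun m j => count_mem (m : nat) (nth [::] bn_reac j))
          (fun m j => count_mem (m : nat) (nth [::] bn_prod j)).

Definition swap_sp (m : 'I_12) : 'I_12 := inord ((m + 6) %% 12).
Definition swap_rx (j : 'I_10) : 'I_10 := inord ((j + 5) %% 10).

Definition motif_a (c d : nat) : {set 'I_12} * {set 'I_10} :=
  ([set sp c NI; sp c Nn; sp c D; sp d Nn; sp d D],
   [set rx c 1; rx c 2; rx c 4; rx d 2; rx d 4]).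
Definition motif_b (c d : nat) : {set 'I_12} * {set 'I_10} :=
  ([set sp c T; sp c D; sp c Nn; sp d Nn; sp d D],
   [set rx c 2; rx c 3; rx c 4; rx d 2; rx d 4]).
Definition motif_c (c d : nat) : {set 'I_12} * {set 'I_10} :=
  ([set sp c NI; sp c Nn; sp c D; sp d NE; sp d Nn; sp d T],
   [set rx c 1; rx c 2; rx c 4; rx d 1; rx d 2; rx d 3]).

(* (j,k) = (1,2) is (c,d) = (0,1); (j,k) = (2,1) is (c,d) = (1,0) *)
Definition notch_motifs : seq ({set 'I_12} * {set 'I_10}) :=
  [:: motif_a 0 1; motif_b 0 1; motif_c 0 1;
      motif_a 1 0; motif_b 1 0; motif_c 1 0]%N.

(* Main.v *)
Require Import Defs.
From HB Require Import structures.
From mathcomp Require Import all_boot all_order all_algebra.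
From mathcomp Require Import reals.
From Stdlib Require Import BinNums BinInt.
From mathcomp Require Import ssrZ.
Import Order.TTheory GRing.Theory Num.Theory.
Local Open Scope ring_scope.
Lemma foldr_sum (R : nmodType) (I : Type) (s : seq I) (F : I -> R) :
  \sum_(x <- s) F x = foldr (fun x a => F x + a) 0 s.
Proof. by elim: s => [|x s IH]; rewrite ?big_nil ?big_cons ?IH. Qed.

Lemma sum_ord_iota (R : nmodType) n (F : nat -> R) :
  \sum_(i < n) F i = \sum_(i <- iota 0 n) F i.
Proof. by rewrite -(big_mkord xpredT) /index_iota subn0. Qed.

Section DetF.
Variable R : nzRingType.
Fixpoint detF (n : nat) (f : nat -> nat -> R) : R :=
  match n with
  | 0 => 1
  | n'.+1 => foldr (fun j acc => let a := f 0%nat j in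
        if a == 0 then acc else
        (if odd j then - a else a) * detF n' (fun i k => f i.+1 (bump j k)) + acc)
        0 (iota 0 n'.+1)
  end.
End DetF.
Arguments detF {R}.

Lemma detF_S (R : nzRingType) n (f : nat -> nat -> R) : detF n.+1 f =
  foldr (fun j acc => let a := f 0%nat j in
        if a == 0 then acc else
        (if odd j then - a else a) * detF n (fun i k => f i.+1 (bump j k)) + acc)
        0 (iota 0 n.+1).
Proof. by []. Qed.

Lemma detF_correct (R : comNzRingType) n (A : 'M[R]_n) (f : nat -> nat -> R) :
  (forall i j : 'I_n, A i j = f i j) -> \det A = detF n f.
Proof.
elim: n A f => [|n IH] A f Hf; first by rewrite det_mx00.
pose G (j : nat) := if f 0%nat j == 0 then 0 else
   (if odd j then - f 0%nat j else f 0%nat j) * detF n (fun i k => f i.+1 (bump j k)).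
rewrite (expand_det_row _ ord0).
rewrite (eq_bigr (fun j : 'I_n.+1 => G j)); last first.
  move=> j _; rewrite /cofactor Hf /G.
  rewrite (IH _ (fun i k => f i.+1 (bump j k))); last first.
    by move=> i k; rewrite !mxE Hf /= /bump /= add1n.
  case: eqP => [->|_]; first by rewrite mul0r.
  rewrite add0n -signr_odd; case: (odd j); rewrite ?expr1 ?expr0 mulrA ?mulrN1 ?mulr1 //.
rewrite sum_ord_iota foldr_sum.
have E : forall s, foldr (fun j acc => G j + acc) 0 s = foldr (fun j acc => let a := f 0%nat j in
        if a == 0 then acc else
        (if odd j then - a else a) * detF n (fun i k => f i.+1 (bump j k)) + acc) 0 s.
  elim=> //= j s ->; rewrite /G; case: eqP => _ //; by rewrite add0r.
exact: E.
Qed.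
Section Subs.
Variable T : Type.
Fixpoint subs (l : seq T) : seq (seq T) :=
  match l with
  | [::] => [:: [::]]
  | x :: l' => let r := subs l' in r ++ map (cons x) r
  end.
End Subs.
Arguments subs {T}.

Lemma mem_subs (T : eqType) (l s : seq T) : (s \in subs l) = subseq s l.
Proof.
elim: l s => [|x l IH] s /=; first by rewrite inE; case: s.
rewrite mem_cat IH; case: s => [|y s] /=; first by rewrite sub0seq.
apply/idP/idP.
  case/orP => [H|]; last first.
    by case/mapP => t; rewrite IH => Ht [Hy Hs]; subst; rewrite eqxx.
  case: (y =P x) => [_|//]; apply: subseq_trans H; exact: subseq_cons.
case: (y =P x) => [->|_ ->//] Hs; apply/orP; right; apply/mapP; exists s => //.
by rewrite IH.
Qed.

Lemma uniq_subs (T : eqType) (l : seq T) : uniq l -> uniq (subs l).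
Proof.
elim: l => [|x l IH] //= /andP[xl ul].
rewrite cat_uniq IH // map_inj_uniq ?IH //; last by move=> a b [].
rewrite andbT; apply/hasPn => t /mapP[u _ ->]; rewrite mem_subs.
by apply/negP => /mem_subseq/(_ x); rewrite inE eqxx => /(_ isT); apply/negP.
Qed.

Definition sl n (B : {set 'I_n}) : seq nat := map val (enum B).
Arguments sl {n}.

Lemma sl_enum n (B : {set 'I_n}) : enum B = filter (mem B) (enum 'I_n).
Proof. by rewrite enumT. Qed.

Lemma sl_subseq n (B : {set 'I_n}) : subseq (sl B) (iota 0 n).
Proof. by rewrite /sl sl_enum -val_enum_ord map_subseq // filter_subseq. Qed.

Lemma size_sl n (B : {set 'I_n}) : size (sl B) = #|B|.
Proof. by rewrite size_map cardE. Qed.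

Lemma sl_mem n (B : {set 'I_n}) (x : 'I_n) : (val x \in sl B) = (x \in B).
Proof. by rewrite mem_map ?mem_enum //; exact: val_inj. Qed.

Lemma sl_inj n : injective (@sl n).
Proof. by move=> B1 B2 E; apply/setP => x; rewrite -!sl_mem E. Qed.

Lemma sl_surj n (s : seq nat) : subseq s (iota 0 n) ->
  s = sl [set i : 'I_n | val i \in s].
Proof.
move/(subseq_uniqP (iota_uniq 0 n)) => {1}->.
rewrite /sl sl_enum -val_enum_ord filter_map; congr map; apply: eq_filter => i.
by rewrite /= inE.
Qed.

Lemma perm_sl n : perm_eq (map (@sl n) (enum {set 'I_n})) (subs (iota 0 n)).
Proof.
apply: uniq_perm; first by rewrite map_inj_uniq ?enum_uniq //; exact: sl_inj.
  exact/uniq_subs/iota_uniq.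
move=> s; rewrite mem_subs; apply/mapP/idP => [[B _ ->]|H]; first exact: sl_subseq.
by exists [set i : 'I_n | val i \in s]; rewrite ?mem_enum //; exact: sl_surj.
Qed.

Lemma sum_sets (R : nmodType) n (F : seq nat -> R) (P : pred nat) :
  \sum_(B : {set 'I_n} | P #|B|) F (sl B) =
  \sum_(s <- subs (iota 0 n) | P (size s)) F s.
Proof.
rewrite -(perm_big _ (perm_sl n)) big_map.
rewrite big_enum_cond; apply: eq_bigl => B; by rewrite size_sl.
Qed.
Lemma pminor_det (R : comNzRingType) n (A : 'M[R]_n) (f : nat -> nat -> R) (B : {set 'I_n}) :
  (forall i j : 'I_n, A i j = f i j) ->
  \det (principal_submx A B) =
  detF (size (sl B)) (fun i j => f (nth 0%nat (sl B) i) (nth 0%nat (sl B) j)).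
Proof.
move=> Hf; rewrite size_sl; apply: detF_correct => i j; rewrite mxE Hf.
have nthE (p : 'I_#|B|) : val (enum_val p) = nth 0%nat (sl B) p.
  by rewrite /enum_val /sl (nth_map (enum_default p)) // -cardE.
by rewrite !nthE.
Qed.

Definition detS {R : nzRingType} (f : nat -> nat -> R) (s : seq nat) : R :=
  detF (size s) (fun i j => f (nth 0%nat s i) (nth 0%nat s j)).

Lemma sum_pminorsE (R : comNzRingType) n (A : 'M[R]_n) (f : nat -> nat -> R) k :
  (forall i j : 'I_n, A i j = f i j) ->
  sum_pminors A k =
  foldr (fun s acc => detS f s + acc) 0 [seq s <- subs (iota 0 n) | size s == k].
Proof.
move=> Hf; rewrite /sum_pminors (eq_bigr (fun B => detS f (sl B))); last first.
  by move=> B _; rewrite (@pminor_det _ _ _ _ B Hf).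
by rewrite (sum_sets _ _ (fun s => detS f s) (fun m => m == k)) -big_filter foldr_sum.
Qed.
Definition Sint (m r : nat) : int :=
  (count_mem m (nth [::] bn_prod r))%:Z - (count_mem m (nth [::] bn_reac r))%:Z.

Definition ztn (k t : nat) : nat :=
  match k, t with
  | 0, 0 => 18 | 0, 1 => 5 | 1, 2 => 18 | 1, 3 => 90 | 2, 4 => 18
  | 3, 2 => 90 | 3, 3 => 18 | 4, 5 => 18 | _, _ => 1 end%nat.

Definition gZ (i m : nat) : Z :=
  foldr (fun j acc => Z_of_int (Sint i j) *
     (if (0 < count_mem m (nth [::] bn_reac j))%nat then Z.of_nat (ztn (j %% 5) (m %% 6)) else 0)
     + acc) 0 (iota 0 10).

Lemma a7Z : foldr (fun s acc => detS gZ s + acc) 0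
   [seq s <- subs (iota 0 12) | size s == 7%nat] = 0.
Proof. vm_compute. reflexivity. Qed.
Section Phi.
Variable R : realType.
Definition phi (z : Z) : R := (int_of_Z z)%:~R.
Lemma phi0 : phi 0 = 0. Proof. by rewrite /phi rmorph0. Qed.
Lemma phi1 : phi 1 = 1. Proof. by rewrite /phi rmorph1. Qed.
Lemma phiD a b : phi (a + b) = phi a + phi b.
Proof. by rewrite /phi rmorphD intrD. Qed.
Lemma phiM a b : phi (a * b) = phi a * phi b.
Proof. by rewrite /phi rmorphM intrM. Qed.
Lemma phiN a : phi (- a) = - phi a.
Proof. by rewrite /phi rmorphN mulrNz. Qed.
Lemma phi_eq0 a : (phi a == 0) = (a == 0).
Proof.
rewrite /phi intr_eq0; apply/eqP/eqP => [H|->]; last by rewrite rmorph0.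
by rewrite -[a]int_of_ZK H.
Qed.
Lemma phi_int x : phi (Z_of_int x) = x%:~R.
Proof. by rewrite /phi Z_of_intK. Qed.
Lemma phi_nat n : phi (Z.of_nat n) = n%:R.
Proof. by rewrite (_ : Z.of_nat n = Z_of_int n%:Z) // phi_int. Qed.
End Phi.

Lemma detF_morph (R S : nzRingType) (f : R -> S) :
  f 0 = 0 -> f 1 = 1 -> (forall a b, f (a + b) = f a + f b) ->
  (forall a b, f (a * b) = f a * f b) -> (forall a, f (- a) = - f a) ->
  (forall a, (f a == 0) = (a == 0)) ->
  forall n g, detF n (fun i j => f (g i j)) = f (detF n g).
Proof.
move=> h0 h1 hD hM hN hE; elim=> [|n IH] g; first by rewrite /= h1.
rewrite !detF_S; elim: (iota 0 n.+1) => [|j s IHs] /=; first by rewrite h0.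
rewrite hE; case: eqP => _; rewrite IHs // hD hM.
rewrite -(IH (fun i k => g i.+1 (bump j k))).
by case: (odd j); rewrite ?hN.
Qed.

Definition rR (R : realType) (j : 'I_10) (m : 'I_12) : R := (ztn ((j : nat) %% 5) ((m : nat) %% 6))%:R.

Lemma sjacE (R : realType) (i m : 'I_12) :
  sjacobian notch_net (rR R) i m = phi R (gZ i m).
Proof.
have -> : gZ i m = \sum_(j < 10) (Z_of_int (Sint i (j : nat)) *
     (if (0 < count_mem (m : nat) (nth [::] bn_reac j))%nat then Z.of_nat (ztn ((j : nat) %% 5) ((m : nat) %% 6)) else 0)).
  by rewrite (sum_ord_iota _ 10 (fun j => (Z_of_int (Sint i j) *
     (if (0 < count_mem (m : nat) (nth [::] bn_reac j))%nat then Z.of_nat (ztn ((j : nat) %% 5) ((m : nat) %% 6)) else 0)))) foldr_sum.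
rewrite (big_morph (phi R) (phiD R) (phi0 R)) /sjacobian mxE.
apply: eq_bigr => j _; rewrite !mxE phiM phi_int /reactant /=.
by case: ifP => _; rewrite ?phi_nat ?phi0.
Qed.
Lemma all_ord n (P : pred nat) : all P (iota 0 n) -> forall i : 'I_n, P i.
Proof. by move=> /allP H i; apply: H; rewrite mem_iota /= ltn_ord. Qed.

Lemma intr_detF (R : realType) n (g : nat -> nat -> int) :
  detF n (fun i j => (g i j)%:~R : R) = (detF n g)%:~R.
Proof.
apply: (@detF_morph int R (fun x : int => x%:~R : R) _ _ _ _ _ _ n g).
- by [].
- by [].
- by move=> a b; rewrite intrD.
- by move=> a b; rewrite intrM.
- by move=> a; rewrite mulrNz.
- by move=> a; rewrite intr_eq0.
Qed.

Lemma rank_ge (R : realType) m n p (A : 'M[R]_(m, n)) (rows cols : seq nat)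
  (h : nat -> nat -> int) :
  size rows = p -> size cols = p -> all (fun x => x < m)%nat rows ->
  all (fun x => x < n)%nat cols ->
  (forall (i : 'I_m) (j : 'I_n), A i j = (h i j)%:~R) ->
  detF p (fun i j => h (nth 0%nat rows i) (nth 0%nat cols j)) != 0 ->
  (p <= \rank A)%nat.
Proof.
move=> sr sc ar ac HA Hd.
have Hr : forall i : 'I_p, (nth 0%nat rows i < m)%nat.
  by move=> i; apply: (all_nthP 0%nat ar); rewrite sr ltn_ord.
have Hc : forall i : 'I_p, (nth 0%nat cols i < n)%nat.
  by move=> i; apply: (all_nthP 0%nat ac); rewrite sc ltn_ord.
pose f i := Ordinal (Hr i); pose g i := Ordinal (Hc i).
have E : mxsub f g A = rowsub f A *m colsub g 1%:M.
  by rewrite mulmx_colsub mulmx1; apply/matrixP => i j; rewrite !mxE.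
have : \rank (mxsub f g A) = p.
  apply: mxrank_unit; rewrite unitmxE unitfE.
  rewrite (detF_correct _ _ _ (fun i j => (h (nth 0%nat rows i) (nth 0%nat cols j))%:~R)).
    by rewrite intr_detF intr_eq0.
  by move=> i j; rewrite mxE HA.
move=> <-; rewrite E; apply: leq_trans (mxrankM_maxl _ _) _.
exact/mxrankS/rowsub_sub.
Qed.

Definition Kl : seq (seq nat) :=
  [:: [:: 1; 2; 5]; [:: 3; 4; 5]; [:: 7; 8; 11]; [:: 9; 10; 11]; [:: 0; 2; 4; 5; 6; 8; 10; 11]]%nat.
Definition kf (i k : nat) : int := if (k \in nth [::] Kl i) then 1 else 0.

Lemma cons_dim5 (R : realType) : cons_dim R notch_net = 5%nat.
Proof.
rewrite /cons_dim mxrank_ker.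
set A := map_mx _ _.
have HA : forall (i : 'I_12) (j : 'I_10), A i j = (Sint i j)%:~R.
  by move=> i j; rewrite !mxE.
have r7 : (7 <= \rank A)%nat.
  apply: (rank_ge _ _ _ _ A [:: 0; 1; 2; 3; 6; 7; 8]%nat [:: 0; 1; 2; 3; 5; 6; 8]%nat Sint
     erefl erefl erefl erefl HA).
  by vm_compute.
pose K : 'M[R]_(5, 12) := \matrix_(i, k) (kf i k)%:~R.
have K0 : K *m A = 0.
  apply/matrixP => i j; rewrite !mxE.
  have H : all (fun i => all (fun j => foldr (fun k a => kf i k * Sint k j + a) 0 (iota 0 12) == 0)
     (iota 0 10)) (iota 0 5) by vm_compute.
  move/all_ord: H => /(_ i) /all_ord /(_ j) /eqP H.
  rewrite (eq_bigr (fun k : 'I_12 => ((kf i k * Sint k j)%:~R : R))); last first.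
    by move=> k _; rewrite !mxE intrM.
  rewrite (sum_ord_iota _ 12 (fun k => ((kf i k * Sint k j)%:~R : R))) foldr_sum.
  rewrite (_ : foldr _ _ _ = (foldr (fun k a => kf i k * Sint k j + a) 0 (iota 0 12))%:~R).
    by rewrite H.
  by elim: (iota 0 12) => //= k s ->; rewrite intrD.
have r5 : (5 <= \rank (kermx A))%nat.
  apply: (@leq_trans (\rank K)); last by apply/mxrankS/sub_kermxP.
  apply: (rank_ge _ _ _ _ K [:: 0; 1; 2; 3; 4]%nat [:: 1; 3; 7; 9; 0]%nat kf
     erefl erefl erefl erefl).
    by move=> i j; rewrite mxE.
  by vm_compute.
move: r5; rewrite mxrank_ker => r5.
have : (\rank A <= 10)%nat by exact: rank_leq_col.
move: r7 r5; set x := \rank A; move=> r7 r5 r10.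
apply/eqP; rewrite eqn_leq r5 andbT leq_subLR. exact: (leq_add r7 (leqnn 5)).
Qed.
Lemma ztn_pos a b : (0 < ztn a b)%nat.
Proof. by rewrite /ztn; case: a => [|[|[|[|[|a]]]]]; case: b => [|[|[|[|[|[|b]]]]]]. Qed.

Lemma phi_detF (R : realType) n (g : nat -> nat -> Z) :
  detF n (fun i j => phi R (g i j)) = phi R (detF n g).
Proof.
apply: (@detF_morph Z R (phi R) (phi0 R) (phi1 R) (phiD R) (phiM R) (phiN R) (phi_eq0 R)).
Qed.

Lemma capacity (R : realType) : capacity_zero_eig R notch_net swap_sp swap_rx.
Proof.
exists (rR R); split; [|split].
- by move=> j m _; rewrite /rR ltr0n ztn_pos.
- move=> j m _; rewrite /rR /swap_rx /swap_sp !inordK ?ltn_pmod //.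
  by rewrite !modn_dvdm // !modnDr.
rewrite /a_coef cons_dim5.
apply: (etrans (sum_pminorsE _ _ _ _ 7%nat (sjacE R))).
have E : forall L, foldr (fun s acc => detS (fun i j => phi R (gZ i j)) s + acc) 0 L =
   phi R (foldr (fun s acc => detS gZ s + acc) 0 L).
  elim=> [|s L IH] /=; first by rewrite phi0.
  by rewrite IH phiD /detS phi_detF.
apply: (etrans (E _)); by rewrite a7Z phi0.
Qed.
Definition csdet (l : seq (nat * nat)) : int :=
  detF (size l) (fun i j => Sint (nth (0, 0) l i).1 (nth (0, 0) l j).2)%nat.

Definition signok (d : int) (m : nat) : bool := Num.sg d == (-1) ^+ m.-1.

Definition upfB (l : seq (nat * nat)) : bool :=
  [&& (0 < size l)%nat, signok (csdet l) (size l) &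
   all (fun s => ((0 < size s) && (size s < size l))%nat ==> ~~ signok (csdet s) (size s))
       (subs l)].

Definition metzB (l : seq (nat * nat)) : bool :=
  all (fun p => all (fun q => (p == q) || (0 <= Sint p.1 q.2)) l) l.

Fixpoint choices (rs : seq nat) : seq (seq (nat * nat)) :=
  match rs with
  | [::] => [:: [::]]
  | r :: rs' => [seq (m, r) :: t | m <- nth [::] bn_reac r, t <- choices rs']
  end.

Definition allCS : seq (seq (nat * nat)) :=
  [seq l <- flatten [seq choices rs | rs <- subs (iota 0 10)] | uniq (map fst l)].

Definition Ls : seq (seq nat * seq nat) :=
  [:: ([:: 1; 2; 3; 8; 9], [:: 0; 1; 3; 6; 8]);
      ([:: 4; 3; 2; 8; 9], [:: 1; 2; 3; 6; 8]);
      ([:: 1; 2; 3; 6; 8; 10], [:: 0; 1; 3; 5; 6; 7]);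
      ([:: 7; 8; 9; 2; 3], [:: 5; 6; 8; 1; 3]);
      ([:: 10; 9; 8; 2; 3], [:: 6; 7; 8; 1; 3]);
      ([:: 7; 8; 9; 0; 2; 4], [:: 5; 6; 8; 0; 1; 2])]%nat.

Definition motok (l : seq (nat * nat)) : bool :=
  has (fun p => (sort leq p.1 == sort leq (map fst l)) && (sort leq p.2 == sort leq (map snd l))) Ls.

Definition checkAll : bool :=
  all (fun l => upfB l ==> (motok l && ~~ metzB l)) allCS.

Lemma checkAllT : checkAll.
Proof. vm_compute. reflexivity. Qed.
Lemma det_reindex (R : comNzRingType) n (A C : 'M[R]_n) (h : 'I_n -> 'I_n) :
  injective h -> (forall i j, C i j = A (h i) (h j)) -> \det C = \det A.
Proof.
move=> hi HC; pose s := perm.perm hi.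
have -> : C = row_perm s (col_perm s A) by apply/matrixP => i j; rewrite !mxE !perm.permE HC.
rewrite row_permE col_permE !det_mulmx !det_perm perm.odd_permV mulrCA.
by rewrite -expr2 sqrr_sign mulr1.
Qed.

Lemma csdet_perm (l1 l2 : seq (nat * nat)) : perm_eq l1 l2 -> csdet l1 = csdet l2.
Proof.
move=> pl; have sz := perm_size pl.
case/(perm_iotaP (0, 0)%nat): pl => Is pI E.
have sI : size Is = size l2 by rewrite (perm_size pI) size_iota.
have uI : uniq Is by rewrite (perm_uniq pI) iota_uniq.
have HI : forall i : 'I_(size l2), (nth 0%nat Is i < size l2)%nat.
  move=> i; have : nth 0%nat Is i \in iota 0 (size l2).
    by rewrite -(perm_mem pI) mem_nth // sI.
  by rewrite mem_iota.
pose h (i : 'I_(size l2)) : 'I_(size l2) := Ordinal (HI i).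
rewrite /csdet sz.
pose M2 : 'M[int]_(size l2) := \matrix_(i, j) Sint (nth (0, 0) l2 i).1 (nth (0, 0) l2 j).2.
pose M1 : 'M[int]_(size l2) := \matrix_(i, j) Sint (nth (0, 0) l1 i).1 (nth (0, 0) l1 j).2.
rewrite -(detF_correct _ _ M1); last by move=> i j; rewrite mxE.
rewrite -(detF_correct _ _ M2); last by move=> i j; rewrite mxE.
apply: (det_reindex _ _ _ _ h).
  move=> i j [] /eqP; rewrite nth_uniq ?sI // => /eqP; exact: val_inj.
move=> i j; rewrite !mxE E !(nth_map 0%nat) ?sI //.
Qed.

Definition upfP (l : seq (nat * nat)) : Prop :=
  [/\ (0 < size l)%nat, signok (csdet l) (size l) &
   forall s, subseq s l -> (0 < size s)%nat -> (size s < size l)%nat ->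
     ~~ signok (csdet s) (size s)].

Lemma upfP_perm l l' : uniq l -> perm_eq l l' -> upfP l -> upfP l'.
Proof.
move=> ul pl [l0 sg H]; have ul' : uniq l' by rewrite -(perm_uniq pl).
split; rewrite -?(perm_size pl) -?(csdet_perm _ _ pl) //.
move=> s ss s0 sl.
have us : uniq s := subseq_uniq ss ul'.
have ps : perm_eq s (filter (mem s) l).
  apply: uniq_perm => //; first exact: filter_uniq.
  move=> x; rewrite mem_filter /=; case xs: (x \in s) => //=.
  by rewrite (perm_mem pl) (mem_subseq ss).
rewrite (csdet_perm _ _ ps) (perm_size ps).
apply: H; rewrite ?filter_subseq // -(perm_size ps) //.
Qed.

Lemma upfB_P l : upfB l = true <-> upfP l.
Proof.
rewrite /upfB /upfP; split.
  case/and3P => l0 sg /allP H; split => // s ss s0 sl.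
  by have := H s; rewrite mem_subs ss s0 sl => /(_ isT).
case=> l0 sg H; rewrite l0 sg; apply/allP => s; rewrite mem_subs => ss.
by apply/implyP => /andP[s0 sl]; apply: H.
Qed.

Lemma slF n (a : seq nat) : sl [set i : 'I_n | val i \in a] = filter (mem a) (iota 0 n).
Proof.
rewrite /sl sl_enum -val_enum_ord [in RHS]filter_map; congr map; apply: eq_filter => i.
by rewrite /= inE.
Qed.

Section CS.
Variables (k : nat) (kap : 'I_k -> 'I_12) (Jf : 'I_k -> 'I_10).

Definition gp (i : 'I_k) : nat * nat := (val (kap i), val (Jf i)).
Definition lAll := map gp (enum 'I_k).

Lemma det_sub (B : {set 'I_k}) :
  \det (principal_submx (cs_matrix notch_net kap Jf) B) = csdet (map gp (enum B)).
Proof.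
rewrite /csdet size_map -cardE; apply: detF_correct => i j; rewrite !mxE.
have E (p : 'I_#|B|) : nth (0, 0)%nat (map gp (enum B)) p = gp (enum_val p).
  by rewrite (nth_map (enum_default p)) // -cardE.
by rewrite !E.
Qed.

Lemma size_lAll : size lAll = k.
Proof. by rewrite size_map size_enum_ord. Qed.

Lemma nth_lAll (i : 'I_k) : nth (0, 0)%nat lAll i = gp i.
Proof. by rewrite /lAll (nth_map i) ?size_enum_ord ?nth_ord_enum. Qed.

Lemma det_full : \det (cs_matrix notch_net kap Jf) = csdet lAll.
Proof.
rewrite /csdet size_lAll; apply: detF_correct => i j; rewrite !mxE.
by rewrite !nth_lAll.
Qed.

Lemma gp_inj : injective Jf -> injective gp.
Proof. by move=> H i j [_ /val_inj /H]. Qed.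

Lemma lAll_uniq : injective Jf -> uniq lAll.
Proof. by move=> H; rewrite map_inj_uniq ?enum_uniq //; exact: gp_inj. Qed.

Lemma upf_equiv : injective Jf ->
  (unstable_positive (cs_matrix notch_net kap Jf) <-> upfP lAll).
Proof.
move=> HJ; rewrite /unstable_positive /upfP size_lAll -det_full; split.
- case=> k0 [sg Hsub]; split => //; first by apply/eqP.
  move=> s ss s0 sk.
  pose B := [set i : 'I_k | gp i \in s].
  have EB : map gp (enum B) = s.
    rewrite sl_enum (eq_filter (a2 := preim gp (mem s))); last by move=> i; rewrite /= inE.
    rewrite -filter_map; apply/esym/subseq_uniqP => //; exact: lAll_uniq.
  have cB : #|B| = size s by rewrite cardE -(size_map gp) EB.
  by have := Hsub B; rewrite det_sub EB cB s0 sk => /(_ isT).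
- case=> k0 sg Hsub; split => //; split; first exact/eqP.
  move=> B /andP[B0 Bk]; rewrite det_sub.
  have ss : subseq (map gp (enum B)) lAll by rewrite sl_enum map_subseq ?filter_subseq.
  by have := Hsub _ ss; rewrite size_map -cardE B0 Bk => /(_ isT isT).
Qed.

Lemma metz_equiv : injective Jf ->
  (metzler (cs_matrix notch_net kap Jf) <-> metzB lAll).
Proof.
move=> HJ; split.
  move=> H; apply/allP => p /mapP[i _ ->]; apply/allP => q /mapP[j _ ->].
  case: (eqVneq i j) => [->|ij]; first by rewrite eqxx.
  by have := H i j ij; rewrite !mxE => ->; rewrite orbT.
move/allP => H i j ij; rewrite !mxE.
have := H (gp i) (map_f _ (mem_enum _ i)) => /allP /(_ (gp j) (map_f _ (mem_enum _ j))).
by rewrite (inj_eq (gp_inj HJ)) (negbTE ij).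
Qed.

Definition motF (p : seq nat * seq nat) : {set 'I_12} * {set 'I_10} :=
  ([set x : 'I_12 | val x \in p.1], [set x : 'I_10 | val x \in p.2]).

Lemma motif_lAll : motif kap Jf = motF (map fst lAll, map snd lAll).
Proof.
rewrite /motif /motF; congr pair; apply/setP => x; rewrite inE.
  apply/imsetP/mapP => [[i _ ->]|[p /mapP[i _ ->] /val_inj->]]; last by exists i.
  by exists (gp i); rewrite ?map_f ?mem_enum.
apply/imsetP/mapP => [[i _ ->]|[p /mapP[i _ ->] /val_inj->]]; last by exists i.
by exists (gp i); rewrite ?map_f ?mem_enum.
Qed.
End CS.
Arguments gp {k} kap Jf i. Arguments lAll {k} kap Jf. Arguments det_sub {k} kap Jf B.
Arguments size_lAll {k kap Jf}. Arguments det_full {k kap Jf}.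
Arguments nth_lAll {k kap Jf} i. Arguments gp_inj {k kap Jf}.
Arguments lAll_uniq {k kap Jf}. Arguments upf_equiv {k kap Jf}.
Arguments metz_equiv {k kap Jf}. Arguments motif_lAll {k} kap Jf.
Definition leR (p q : nat * nat) : bool := (p.2 <= q.2)%nat.
Lemma leR_total : total leR. Proof. by move=> p q; exact: leq_total. Qed.
Lemma leR_tr : transitive leR. Proof. by move=> p q r; exact: leq_trans. Qed.

Lemma choices_mem l : all (fun p => p.1 \in nth [::] bn_reac p.2) l ->
  l \in choices (map snd l).
Proof.
elim: l => [|[m r] l IH] /=; first by rewrite inE.
case/andP => Hm Hl; apply/allpairsP; exists (m, l); split => //; exact: IH.
Qed.

Lemma sorted_subseq_iota (s : seq nat) n : sorted leq s -> uniq s ->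
  all (fun x => x < n)%nat s -> subseq s (iota 0 n).
Proof.
move=> ss us ha.
have -> : s = filter (mem s) (iota 0 n).
  apply: (sorted_eq leq_trans anti_leq) => //.
    exact: (sorted_filter leq_trans _ (iota_sorted 0 n)).
  apply: uniq_perm => //; first exact: (filter_uniq _ (iota_uniq 0 n)).
  move=> x; rewrite mem_filter mem_iota /=; case xs: (x \in s) => //=.
  by rewrite (allP ha x xs).
exact: filter_subseq.
Qed.

Lemma metzB_eq l l' : l =i l' -> metzB l = metzB l'.
Proof. by move=> E; rewrite /metzB (eq_all_r E); apply: eq_all => p; exact: eq_all_r. Qed.

Lemma motF_eq p q : p.1 =i q.1 -> p.2 =i q.2 -> motF p = motF q.
Proof.
by move=> E1 E2; rewrite /motF; congr pair; apply/setP => x; rewrite !inE ?E1 ?E2.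
Qed.

Lemma eq_inord n (x : 'I_n.+1) m : (m <= n)%nat -> (x == inord m) = (val x == m).
Proof. by move=> H; rewrite -val_eqE /= inordK. Qed.

Lemma motifsE : notch_motifs = map motF Ls.
Proof.
rewrite /notch_motifs /Ls /= /motif_a /motif_b /motif_c /motF /sp /rx /=.
by congr [:: _; _; _; _; _; _]; congr pair; apply/setP => x;
  rewrite !inE !eq_inord // -!orbA.
Qed.
Lemma cs_main k (kap : 'I_k -> 'I_12) (Jf : 'I_k -> 'I_10) :
  is_cs notch_net kap Jf -> unstable_positive (cs_matrix notch_net kap Jf) ->
  motif kap Jf \in notch_motifs /\ ~ metzler (cs_matrix notch_net kap Jf).
Proof.
case=> Hk [HJ Hr] Hu.
set L := lAll kap Jf; set Lc := sort leR L.
have pL : perm_eq L Lc by rewrite perm_sym perm_sort.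
have uL : uniq L := lAll_uniq HJ.
have upc : upfB Lc.
  by apply/upfB_P; apply: (upfP_perm _ _ uL pL); exact: (upf_equiv HJ).1 Hu.
have mL : forall x, (x \in map snd Lc) = (x \in map snd L).
  by move=> x; rewrite (perm_mem (perm_map snd pL)).
have inCS : Lc \in allCS.
  rewrite mem_filter; apply/andP; split.
    rewrite -(perm_uniq (perm_map fst pL)) /L /lAll -map_comp map_inj_uniq ?enum_uniq //.
    by move=> i j /val_inj /Hk.
  apply/flattenP; exists (choices (map snd Lc)).
    apply/map_f; rewrite mem_subs; apply: sorted_subseq_iota.
    - by rewrite sorted_map; exact: (sort_sorted leR_total).
    - rewrite -(perm_uniq (perm_map snd pL)) /L /lAll -map_comp map_inj_uniq ?enum_uniq //.
      by move=> i j /val_inj /HJ.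
    - by apply/allP => x; rewrite mL => /mapP[p /mapP[i _ ->] ->]; exact: ltn_ord.
  apply: choices_mem; rewrite -(eq_all_r (perm_mem pL)).
  apply/allP => p /mapP[i _ ->] /=; have := Hr i.
  by rewrite /reactant /= -has_count has_pred1.
have := allP checkAllT Lc inCS => /implyP /(_ upc) /andP [mok nmz].
split.
  rewrite (motif_lAll kap Jf) motifsE; case/hasP: mok => p pin /andP [/eqP e1 /eqP e2].
  apply/mapP; exists p => //; apply: motF_eq => x /=.
    by rewrite -(mem_sort leq p.1) e1 mem_sort (perm_mem (perm_map fst pL)).
  by rewrite -(mem_sort leq p.2) e2 mem_sort mL.
move/(metz_equiv HJ); rewrite (metzB_eq _ _ (perm_mem pL)).
by move=> H; rewrite H in nmz.
Qed.

Lemma witness (l : seq (nat * nat)) :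
  uniq (map fst l) -> uniq (map snd l) -> all (fun p => p.1 < 12)%nat l ->
  all (fun p => p.2 < 10)%nat l -> all (fun p => p.1 \in nth [::] bn_reac p.2) l ->
  upfB l ->
  exists (k : nat) (kap : 'I_k -> 'I_12) (Jf : 'I_k -> 'I_10),
    [/\ is_cs notch_net kap Jf, unstable_positive (cs_matrix notch_net kap Jf)
      & motif kap Jf = motF (map fst l, map snd l)].
Proof.
move=> u1 u2 a1 a2 ar up.
pose kap (i : 'I_(size l)) : 'I_12 := inord (nth (0, 0) l i).1.
pose Jf (i : 'I_(size l)) : 'I_10 := inord (nth (0, 0) l i).2.
have vk i : val (kap i) = (nth (0, 0) l i).1.
  by rewrite /kap /= inordK // (all_nthP (0, 0) a1) ?ltn_ord.
have vj i : val (Jf i) = (nth (0, 0) l i).2.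
  by rewrite /Jf /= inordK // (all_nthP (0, 0) a2) ?ltn_ord.
have EL : lAll kap Jf = l.
  apply: (@eq_from_nth _ (0, 0)%nat); first by rewrite size_lAll.
  move=> i; rewrite size_lAll => Hi.
  by rewrite -[i]/(val (Ordinal Hi)) nth_lAll /gp vk vj; case: (nth _ l _).
have HJ : injective Jf.
  move=> i j /(congr1 val); rewrite !vj => E; apply/val_inj/eqP.
  rewrite -(nth_uniq 0%nat _ _ u2) ?size_map ?ltn_ord //.
  by rewrite !(nth_map (0, 0)%nat) ?ltn_ord // E.
have HK : injective kap.
  move=> i j /(congr1 val); rewrite !vk => E; apply/val_inj/eqP.
  rewrite -(nth_uniq 0%nat _ _ u1) ?size_map ?ltn_ord //.
  by rewrite !(nth_map (0, 0)%nat) ?ltn_ord // E.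
exists (size l), kap, Jf; split.
- split => //; split => // i; rewrite /reactant /= vk vj -has_count has_pred1.
  exact: (all_nthP (0, 0) ar).
- by apply/(upf_equiv HJ); rewrite EL; exact/upfB_P.
- by rewrite motif_lAll EL.
Qed.

Definition Ws : seq (seq (nat * nat)) :=
  [:: [:: (1, 0); (2, 1); (3, 3); (8, 6); (9, 8)];
      [:: (9, 1); (4, 2); (2, 3); (3, 6); (8, 8)];
      [:: (2, 1); (3, 3); (7, 5); (8, 6); (9, 8)];
      [:: (9, 1); (2, 3); (3, 6); (10, 7); (8, 8)];
      [:: (0, 0); (2, 1); (4, 2); (7, 5); (8, 6); (9, 8)];
      [:: (1, 0); (2, 1); (3, 3); (6, 5); (8, 6); (10, 7)]]%nat.

Definition wok (l : seq (nat * nat)) : bool :=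
  [&& uniq (map fst l), uniq (map snd l), all (fun p => p.1 < 12)%nat l,
      all (fun p => p.2 < 10)%nat l, all (fun p => p.1 \in nth [::] bn_reac p.2) l
    & upfB l].

Lemma Ws_ok : all (fun p => has (fun l => wok l && (sort leq (map fst l) == sort leq p.1)
    && (sort leq (map snd l) == sort leq p.2)) Ws) Ls.
Proof. vm_compute. reflexivity. Qed.

Lemma part4 mo : mo \in notch_motifs ->
  exists (k : nat) (kap : 'I_k -> 'I_12) (Jf : 'I_k -> 'I_10),
    [/\ is_cs notch_net kap Jf, unstable_positive (cs_matrix notch_net kap Jf)
      & motif kap Jf = mo].
Proof.
rewrite motifsE => /mapP [p pin ->].
have := allP Ws_ok p pin => /hasP [l _ /andP [/andP [w e1] e2]].
case/and5P: w => u1 u2 a1 a2 /andP[ar up].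
have [k [kap [Jf [H1 H2 H3]]]] := witness _ u1 u2 a1 a2 ar up.
exists k, kap, Jf; split => //; rewrite H3; apply: motF_eq => x /=.
  by rewrite -(mem_sort leq p.1) -(eqP e1) mem_sort.
by rewrite -(mem_sort leq p.2) -(eqP e2) mem_sort.
Qed.

Lemma motifs_uniq : uniq notch_motifs.
Proof.
rewrite motifsE; apply: (@map_uniq _ _ (fun mo => (sl mo.1, sl mo.2))).
rewrite -map_comp (@eq_map _ _ _ (fun p => (filter (mem p.1) (iota 0 12),
   filter (mem p.2) (iota 0 10)))); first by vm_compute.
by move=> p; rewrite /= !slF.
Qed.

Theorem theorem3p2 (R : realType) :
  capacity_zero_eig R notch_net swap_sp swap_rx /\
  uniq notch_motifs /\
  (forall (k : nat) (kap : 'I_k -> 'I_12) (Jf : 'I_k -> 'I_10),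
     is_cs notch_net kap Jf -> unstable_positive (cs_matrix notch_net kap Jf) ->
     motif kap Jf \in notch_motifs) /\
  (forall mo, mo \in notch_motifs ->
     exists (k : nat) (kap : 'I_k -> 'I_12) (Jf : 'I_k -> 'I_10),
       [/\ is_cs notch_net kap Jf, unstable_positive (cs_matrix notch_net kap Jf)
         & motif kap Jf = mo]) /\
  (forall (k : nat) (kap : 'I_k -> 'I_12) (Jf : 'I_k -> 'I_10),
     is_cs notch_net kap Jf -> unstable_positive (cs_matrix notch_net kap Jf) ->
     motif kap Jf \in notch_motifs -> ~ metzler (cs_matrix notch_net kap Jf)) /\
  ~ autocatalytic_network notch_net.
Proof.
split; first exact: capacity.
split; first exact: motifs_uniq.
split; first by move=> k kap Jf H1 H2; exact: (cs_main _ _ _ H1 H2).1.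
split; first exact: part4.
split; first by move=> k kap Jf H1 H2 _; exact: (cs_main _ _ _ H1 H2).2.
by case=> k [kap [Jf [H1 [H2 H3]]]]; exact: (cs_main _ _ _ H1 H2).2 H3.
Qed.
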